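(* Let $\mathcal K$ be a tame topological Kuranishi atlas and let $(I,x),(J,y)$ with $x\in U_I$, $y\in U_J$. The following are equivalent: (1) $(I,x)\sim(J,y)$ in the equivalence relation defining $|\mathcal K|$; (2) $I\cup J\in\mathcal I_{\mathcal K}$, $x\in U_{I(I\cup J)}$, $y\in U_{J(I\cup J)}$ and $\phi_{I(I\cup J)}(x)=\phi_{J(I\cup J)}(y)$; (3) either $I\cap J\neq\emptyset$ and there is $w\in U_{(I\cap J)I}\cap U_{(I\cap J)J}$ with $\phi_{(I\cap J)I}(w)=x$ and $\phi_{(I\cap J)J}(w)=y$, or $I\cap J=\emptyset$, $\mathfrak s_I(x)=0_I(x)$, $\mathfrak s_J(y)=0_J(y)$ and $\psi_I(x)=\psi_J(y)$. The analogous equivalences hold for $(I,e),(J,f)$ with $e\in\mathbb E_I$, $f\in\mathbb E_J$ and the relation defining $|\mathbf E_{\mathcal K}|$, with $\phi$ replaced by $\widehat\Phi$ and domains $U_{\bullet\bullet}$ replaced by $\mathrm{pr}_\bullet^{-1}(U_{\bullet\bullet})$, where in the case $I\cap J=\emptyset$ the condition is that $e=\mathfrak s_I(x)=0_I(x)$ and $f=\mathfrak s_J(y)=0_J(y)$ for some $x\in U_I$, $y\in U_J$ with $\psi_I(x)=\psi_J(y)$. Moreover, for each $I\in\mathcal I_{\mathcal K}$ the maps $\pi_{\mathcal K}|_{U_I}:U_I\to|\mathcal K|$ and $\pi_{\mathbf E_{\mathcal K}}|_{\mathbb E_I}:\mathbb E_I\to|\mathbf E_{\mathcal K}|$ are 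injective.
   Context: $X$ is a compact metrizable space. Charts: a topological Kuranishi chart for $X$ with open footprint $F\subset X$ is a tuple $\mathbf K=(U,\mathbb E,\mathfrak s,\psi)$ where $U$ is a separable, locally compact, metrizable space; $\mathbb E$ is a separable, locally compact, metrizable space with continuous maps $\mathrm{pr}:\mathbb E\to U$ and $0:U\to\mathbb E$ with $\mathrm{pr}\circ0=\mathrm{id}_U$; $\mathfrak s:U\to\mathbb E$ is continuous with $\mathrm{pr}\circ\mathfrak s=\mathrm{id}_U$; and $\psi$ is a homeomorphism from $\mathfrak s^{-1}(0):=\{x\in U:\mathfrak s(x)=0(x)\}$ onto $F$. Coordinate changes: for charts $\mathbf K_I,\mathbf K_J$ with $F_I\cap F_J\neq\emptyset$, a coordinate change $\widehat\Phi_{IJ}:\mathbf K_I\to\mathbf K_J$ consists of an open set $U_{IJ}\subset U_I$ with $U_{IJ}\cap\mathfrak s_I^{-1}(0_I)=\psi_I^{-1}(F_I\cap F_J)$ and a topological embedding $\widehat\Phi_{IJ}:\mathrm{pr}_I^{-1}(U_{IJ})\to\mathbb E_J$ such that there is a topological embedding $\phi_{IJ}:U_{IJ}\to U_J$ with $\mathrm{pr}_J\circ\widehat\Phi_{IJ}=\phi_{IJ}\circ\mathrm{pr}_I$, $0_J\circ\phi_{IJ}=\widehat\Phi_{IJ}\circ0_I$ and $\mathfrak s_J\circ\phi_{IJ}=\widehat\Phi_{IJ}\circ\mathfrak s_I$ on $U_{IJ}$, and $\phi_{IJ}=\psi_J^{-1}\circ\psi_I$ on $U_{IJ}\cap\mathfrak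 s_I^{-1}(0_I)$. Atlases: a covering family of basic charts is a finite family $(\mathbf K_i)_{i=1,\dots,N}$ of charts whose footprints cover $X$; $\mathcal I_{\mathcal K}$ is the set of nonempty $I\subset\{1,\dots,N\}$ with $F_I:=\bigcap_{i\in I}F_i\neq\emptyset$. Transition data consist of a chart $\mathbf K_J$ with footprint $F_J$ for each $J\in\mathcal I_{\mathcal K}$ with $|J|\ge2$ (and $\mathbf K_{\{i\}}:=\mathbf K_i$), and a coordinate change $\widehat\Phi_{IJ}:\mathbf K_I\to\mathbf K_J$ for all $I\subsetneq J$ in $\mathcal I_{\mathcal K}$. We set $U_{II}:=U_I$, $\phi_{II}:=\mathrm{id}_{U_I}$, $\widehat\Phi_{II}:=\mathrm{id}_{\mathbb E_I}$. For $I\subsetneq J\subsetneq K$ let $U_{IJK}:=U_{IJ}\cap\phi_{IJ}^{-1}(U_{JK})$. The triple satisfies the weak cocycle condition if $\widehat\Phi_{JK}\circ\widehat\Phi_{IJ}=\widehat\Phi_{IK}$ on $\mathrm{pr}_I^{-1}(U_{IJK}\cap U_{IK})$; the cocycle condition if in addition $U_{IJK}\subset U_{IK}$; the strong cocycle condition if in addition $U_{IJK}=U_{IK}$. A weak topological Kuranishi atlas $\mathcal K$ is a covering family with transition data satisfying the weak cocycle condition for all such triples; a topological Kuranishi atlas is one satisfying the cocycle condition for all triples. Filtrations: a weak topological Kuranishi atlas is filtered if it is equipped with closed subsets $\mathbb E_{IJ}\subset\mathbb E_J$ for all $J\in\mathcal I_{\mathcal K}$ and $I\subset J$ (including $I=\emptyset$)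 such that (i) $\mathbb E_{JJ}=\mathbb E_J$ and $\mathbb E_{\emptyset J}=\mathrm{im}\,0_J$; (ii) $\widehat\Phi_{JK}(\mathrm{pr}_J^{-1}(U_{JK})\cap\mathbb E_{IJ})=\mathbb E_{IK}\cap\mathrm{pr}_K^{-1}(\mathrm{im}\,\phi_{JK})$ for $I\subset J\subsetneq K$; (iii) $\mathbb E_{IJ}\cap\mathbb E_{HJ}=\mathbb E_{(I\cap H)J}$ for $I,H\subset J$; (iv) $\mathrm{im}\,\phi_{IJ}$ is an open subset of $\mathfrak s_J^{-1}(\mathbb E_{IJ})$ for $I\subsetneq J$. Tameness: a filtered weak topological Kuranishi atlas is tame if $U_{IJ}\cap U_{IK}=U_{I(J\cup K)}$ for all $I,J,K\in\mathcal I_{\mathcal K}$ with $I\subset J,K$ (where $U_{IL}:=\emptyset$ if $L\notin\mathcal I_{\mathcal K}$), and $\phi_{IJ}(U_{IK})=U_{JK}\cap\mathfrak s_J^{-1}(\mathbb E_{IJ})$ for all $I\subset J\subset K$ in $\mathcal I_{\mathcal K}$ (equalities of indices allowed). Virtual neighbourhood: for a topological Kuranishi atlas, $|\mathcal K|$ is the quotient of $\bigsqcup_{I\in\mathcal I_{\mathcal K}}U_I=\{(I,x):x\in U_I\}$ by the equivalence relation generated by $(I,x)\sim(J,\phi_{IJ}(x))$ for $I\subset J$, $x\in U_{IJ}$, with the quotient topology and projection $\pi_{\mathcal K}$; similarly $|\mathbf E_{\mathcal K}|$ is the quotient of $\bigsqcup_I\mathbb E_I$ by the relation generated by $(I,e)\sim(J,\widehat\Phi_{IJ}(e))$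 for $e\in\mathrm{pr}_I^{-1}(U_{IJ})$, with projection $\pi_{\mathbf E_{\mathcal K}}$. *)

(* Defs.v *)
From Stdlib Require Import Reals List Relations.
From HB Require Import structures.
From mathcomp Require Import all_boot.
Set Implicit Arguments.
Unset Strict Implicit.
Unset Printing Implicit Defensive.

Definition is_topology (T : Type) (op : (T -> Prop) -> Prop) : Prop :=
  op (fun _ => True) /\ op (fun _ => False) /\
  (forall A B, op A -> op B -> op (fun x => A x /\ B x)) /\
  (forall Fam : (T -> Prop) -> Prop,
      (forall A, Fam A -> op A) -> op (fun x => exists A, Fam A /\ A x)).

Record topspace := TopSpace {
  pt :> Type;
  opn : (pt -> Prop) -> Prop;
  opn_topology : is_topology opn }.

Definition closed (T : topspace) (A : T -> Prop) : Prop :=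
  opn (fun x => ~ A x).

Definition open_in (T : topspace) (S A : T -> Prop) : Prop :=
  (forall x, A x -> S x) /\
  exists V, opn V /\ forall x, S x -> (A x <-> V x).

Definition continuous_on (T T' : topspace) (f : T -> T') (S : T -> Prop) : Prop :=
  forall V, opn V -> exists W, opn W /\ forall x, S x -> (V (f x) <-> W x).

Definition continuous (T T' : topspace) (f : T -> T') : Prop :=
  continuous_on f (fun _ => True).

Definition embedding_on (T T' : topspace) (f : T -> T') (S : T -> Prop) : Prop :=
  (forall x y, S x -> S y -> f x = f y -> x = y) /\
  continuous_on f S /\
  (forall W, opn W -> exists V, opn V /\ forall x, S x -> (W x <-> V (f x))).

Definition homeo_onto (T T' : topspace) (f : T -> T') (S : T -> Prop) (B : T' -> Prop) : Prop :=
  embedding_on f S /\ (forall x, S x -> B (f x)) /\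
  (forall b, B b -> exists x, S x /\ f x = b).

Definition compact_subset (T : topspace) (K : T -> Prop) : Prop :=
  forall C : (T -> Prop) -> Prop,
    (forall A, C A -> opn A) ->
    (forall x, K x -> exists A, C A /\ A x) ->
    exists l : list (T -> Prop),
      (forall A, List.In A l -> C A) /\
      (forall x, K x -> exists A, List.In A l /\ A x).

Definition compact_space (T : topspace) : Prop := compact_subset (fun _ : T => True).

Definition is_metric (T : Type) (d : T -> T -> R) : Prop :=
  (forall x y, Rle R0 (d x y)) /\
  (forall x y, d x y = R0 <-> x = y) /\
  (forall x y, d x y = d y x) /\
  (forall x y z, Rle (d x z) (Rplus (d x y) (d y z))).

Definition metric_open (T : Type) (d : T -> T -> R) (A : T -> Prop) : Prop :=
  forall x, A x -> exists r, Rlt R0 r /\ forall y, Rlt (d x y) r -> A y.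

Definition metrizable (T : topspace) : Prop :=
  exists d : T -> T -> R, is_metric d /\ forall A, opn A <-> metric_open d A.

Definition countable_subset (T : Type) (D : T -> Prop) : Prop :=
  exists g : T -> nat, forall x y, D x -> D y -> g x = g y -> x = y.

Definition separable (T : topspace) : Prop :=
  exists D : T -> Prop, countable_subset D /\
    forall V, opn V -> (exists x, V x) -> exists x, V x /\ D x.

Definition locally_compact (T : topspace) : Prop :=
  forall x : T, exists V K : T -> Prop,
    opn V /\ V x /\ (forall y, V y -> K y) /\ compact_subset K.

Definition sep_lc_metrizable (T : topspace) : Prop :=
  separable T /\ locally_compact T /\ metrizable T.

Record chart_data (X : Type) := ChartData {
  cU : topspace;
  cE : topspace;
  pr : cE -> cU;
  zero : cU -> cE;
  sec : cU -> cE;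
  psi : cU -> X }.         (* footprint map, relevant on the zero set *)

Arguments cU {X}. Arguments cE {X}. Arguments pr {X}. Arguments zero {X}.
Arguments sec {X}. Arguments psi {X}.

Definition zset (X : Type) (K : chart_data X) (x : cU K) : Prop :=
  sec K x = zero K x.

Definition is_chart (X : topspace) (K : chart_data X) (F : X -> Prop) : Prop :=
  sep_lc_metrizable (cU K) /\ sep_lc_metrizable (cE K) /\
  continuous (pr K) /\ continuous (zero K) /\ continuous (sec K) /\
  (forall x, pr K (zero K x) = x) /\
  (forall x, pr K (sec K x) = x) /\
  opn F /\
  homeo_onto (psi K) (@zset _ K) F.

(* Atlas data: indexed by subsets of {0..N-1}.  Partial maps are total *)
(* functions together with their domain predicates.                   *)

Record atlas_data (X : Type) (N : nat) := AtlasData {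
  Foot : 'I_N -> X -> Prop;
  Ch : {set 'I_N} -> chart_data X;                       (* K_I ; K_{i} = basic chart *)
  UU : forall I J : {set 'I_N}, cU (Ch I) -> Prop;
  phi : forall I J : {set 'I_N}, cU (Ch I) -> cU (Ch J);
  Phi : forall I J : {set 'I_N}, cE (Ch I) -> cE (Ch J);
  Efilt : forall I J : {set 'I_N}, cE (Ch J) -> Prop }.

Arguments Foot {X N}. Arguments Ch {X N}. Arguments UU {X N}.
Arguments phi {X N}. Arguments Phi {X N}. Arguments Efilt {X N}.

Section AtlasDefs.
Variables (X : topspace) (N : nat) (A : atlas_data X N).
Implicit Types I J L H : {set 'I_N}.

Definition FI (I : {set 'I_N}) (x : X) : Prop := forall i, i \in I -> Foot A i x.

Definition IK (I : {set 'I_N}) : Prop := I != set0 /\ exists x, FI I x.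

Definition is_coord_change (I J : {set 'I_N}) : Prop :=
  opn (UU A I J) /\
  (forall x, (UU A I J x /\ zset x) <-> (zset x /\ FI I (psi _ x) /\ FI J (psi _ x))) /\
  embedding_on (Phi A I J) (fun e => UU A I J (pr _ e)) /\
  embedding_on (phi A I J) (UU A I J) /\
  (forall e, UU A I J (pr _ e) -> pr _ (Phi A I J e) = phi A I J (pr _ e)) /\
  (forall x, UU A I J x -> zero _ (phi A I J x) = Phi A I J (zero _ x)) /\
  (forall x, UU A I J x -> sec _ (phi A I J x) = Phi A I J (sec _ x)) /\
  (forall x, UU A I J x -> zset x ->
     zset (phi A I J x) /\ psi _ (phi A I J x) = psi _ x).

Definition UIJK (I J L : {set 'I_N}) (x : cU (Ch A I)) : Prop :=
  UU A I J x /\ UU A J L (phi A I J x).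

Definition is_top_atlas : Prop :=
  (forall i, is_chart (Ch A [set i]) (Foot A i)) /\
  (forall x, exists i, Foot A i x) /\
  (forall J, IK J -> 2 <= #|J| -> is_chart (Ch A J) (FI J)) /\
  (forall I x, UU A I I x) /\
  (forall I x, phi A I I x = x) /\
  (forall I e, Phi A I I e = e) /\
  (forall I J, IK I -> IK J -> I \proper J -> is_coord_change I J) /\
  (forall I J L, IK I -> IK J -> IK L -> I \proper J -> J \proper L ->
     (forall e, @UIJK I J L (pr _ e) -> UU A I L (pr _ e) ->
        Phi A J L (Phi A I J e) = Phi A I L e) /\
     (forall x, @UIJK I J L x -> UU A I L x)).

Definition is_filtered : Prop :=
  (forall I J, IK J -> I \subset J -> closed (Efilt A I J)) /\
  (forall J, IK J -> forall e, Efilt A J J e) /\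
  (forall J, IK J -> forall e, Efilt A set0 J e <-> exists x, e = zero _ x) /\
  (forall I J L, IK J -> IK L -> I \subset J -> J \proper L ->
     forall f, (exists e, UU A J L (pr _ e) /\ Efilt A I J e /\ Phi A J L e = f) <->
               (Efilt A I L f /\ exists u, UU A J L u /\ phi A J L u = pr _ f)) /\
  (forall I H J, IK J -> I \subset J -> H \subset J ->
     forall e, (Efilt A I J e /\ Efilt A H J e) <-> Efilt A (I :&: H) J e) /\
  (forall I J, IK I -> IK J -> I \proper J ->
     open_in (fun y => Efilt A I J (sec _ y))
             (fun y => exists x, UU A I J x /\ phi A I J x = y)).

(* U_IL with the convention U_IL = empty if L not in I_K *)
Definition UUc (I L : {set 'I_N}) (x : cU (Ch A I)) : Prop := IK L /\ UU A I L x.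

Definition is_tame : Prop :=
  (forall I J L, IK I -> IK J -> IK L -> I \subset J -> I \subset L ->
     forall x, (UU A I J x /\ UU A I L x) <-> @UUc I (J :|: L) x) /\
  (forall I J L, IK I -> IK J -> IK L -> I \subset J -> J \subset L ->
     forall y, (exists x, UU A I L x /\ UU A I J x /\ phi A I J x = y) <->
               (UU A J L y /\ Efilt A I J (sec _ y))).

Definition is_tame_top_atlas : Prop := is_top_atlas /\ is_filtered /\ is_tame.

Definition ptU := {I : {set 'I_N} & cU (Ch A I)}.
Definition ptE := {I : {set 'I_N} & cE (Ch A I)}.

Inductive stepU : ptU -> ptU -> Prop :=
  | stepU_intro I J (x : cU (Ch A I)) :
      IK I -> IK J -> I \subset J -> UU A I J x ->
      stepU (existT _ I x) (existT _ J (phi A I J x)).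

Inductive stepE : ptE -> ptE -> Prop :=
  | stepE_intro I J (e : cE (Ch A I)) :
      IK I -> IK J -> I \subset J -> UU A I J (pr _ e) ->
      stepE (existT _ I e) (existT _ J (Phi A I J e)).

Definition equivU : ptU -> ptU -> Prop := clos_refl_sym_trans ptU stepU.
Definition equivE : ptE -> ptE -> Prop := clos_refl_sym_trans ptE stepE.

End AtlasDefs.

Arguments FI {X N}. Arguments IK {X N}. Arguments is_tame_top_atlas {X N}.
Arguments equivU {X N}. Arguments equivE {X N}.

(* Main.v *)
Require Import Defs.
From Stdlib Require Import Reals List Relations.
From HB Require Import structures.
From mathcomp Require Import all_boot.



Lemma IK_sub {X : topspace} {N : nat} {A : atlas_data X N} (H L : {set 'I_N}) :
  IK A L -> H \subset L -> H != set0 -> IK A H.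
Proof.
move=> [_ [z hz]] hHL hH; split=> //; exists z => i hi; apply: hz; exact: (subsetP hHL).
Qed.

Lemma FI_U {X : topspace} {N : nat} {A : atlas_data X N} (I J : {set 'I_N}) z :
  FI A I z -> FI A J z -> FI A (I :|: J) z.
Proof. move=> hI hJ i; rewrite in_setU => /orP [] ?; [exact: hI| exact: hJ]. Qed.

Lemma chart_facts {X : topspace} {N : nat} {A : atlas_data X N}
  (hA : is_tame_top_atlas A) {I : {set 'I_N}} : IK A I ->
  (forall x, pr (Ch A I) (zero (Ch A I) x) = x) /\ (forall x, pr (Ch A I) (sec (Ch A I) x) = x) /\
  (forall x, zset x -> FI A I (psi (Ch A I) x)) /\
  (forall x y : cU (Ch A I), zset x -> zset y -> psi (Ch A I) x = psi (Ch A I) y -> x = y).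
Proof.
move: hA => [[hc1 [_ [hcJ _]]] _] hI.
have [h2|h1] := leqP 2 #|I|.
  have [_ [_ [_ [_ [_ [hz [hs [_ [[hinj _] [hF _]]]]]]]]]] := hcJ I hI h2.
  by split=> //; split=> //; split=> //.
have : #|I| == 1.
  have hpos : 0 < #|I| by move: hI => [hne _]; rewrite card_gt0.
  by move: h1 hpos; case: #|I| => [|[|]].
move=> /cards1P [i ->].
have [_ [_ [_ [_ [_ [hz [hs [_ [[hinj _] [hF _]]]]]]]]]] := hc1 i.
split=> //; split=> //; split=> // x hx j; rewrite in_set1 => /eqP ->; exact: hF.
Qed.

Ltac unpackA hA :=
  move: (hA) => [[hc1 [hcov [hcJ [hUII [hphiII [hPhiII [hcc hcoc]]]]]]]
                 [[hfc [hf1 [hf2 [hf3 [hf4 hf5]]]]] [ht1 ht2]]].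



Lemma cc_facts {X : topspace} {N : nat} {A : atlas_data X N}
  (hA : is_tame_top_atlas A) {I J : {set 'I_N}} : IK A I -> IK A J -> I \subset J ->
  (forall e, UU A I J (pr _ e) -> pr _ (Phi A I J e) = phi A I J (pr _ e)) /\
  (forall x, UU A I J x -> zero _ (phi A I J x) = Phi A I J (zero _ x)) /\
  (forall x, UU A I J x -> sec _ (phi A I J x) = Phi A I J (sec _ x)) /\
  (forall x, UU A I J x -> zset x -> zset (phi A I J x) /\ psi _ (phi A I J x) = psi _ x) /\
  (forall x x', UU A I J x -> UU A I J x' -> phi A I J x = phi A I J x' -> x = x') /\
  (forall e e', UU A I J (pr _ e) -> UU A I J (pr _ e') -> Phi A I J e = Phi A I J e' -> e = e').
Proof.
unpackA hA => hI hJ hIJ.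
case: (eqVneq I J) => [<-|hne].
  by do 5?split=> *; rewrite ?hPhiII ?hphiII //;
    match goal with H : _ = _ |- _ => move: H; rewrite ?hPhiII ?hphiII end.
have hp : I \proper J by rewrite properEneq hne.
have [_ [_ [[hPinj _] [[hpinj _] [hpr [hzero [hsec hpsi]]]]]]] := hcc I J hI hJ hp.
do !split=> //.
Qed.

Lemma cocE {X : topspace} {N : nat} {A : atlas_data X N}
  (hA : is_tame_top_atlas A) {I J L : {set 'I_N}} : IK A I -> IK A J -> IK A L ->
  I \subset J -> J \subset L -> forall e,
  UU A I J (pr _ e) -> UU A J L (phi A I J (pr _ e)) -> UU A I L (pr _ e) ->
  Phi A J L (Phi A I J e) = Phi A I L e.
Proof.
unpackA hA => hI hJ hL hIJ hJL e h1 h2 h3.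
case: (eqVneq I J) => [eIJ|nIJ].
  by move: h2 h3; rewrite -eIJ hPhiII.
case: (eqVneq J L) => [eJL|nJL].
  by move: h2 h3; rewrite -eJL hPhiII.
have pIJ : I \proper J by rewrite properEneq nIJ.
have pJL : J \proper L by rewrite properEneq nJL.
by have [-> //] := hcoc I J L hI hJ hL pIJ pJL; split.
Qed.

Lemma cocU {X : topspace} {N : nat} {A : atlas_data X N}
  (hA : is_tame_top_atlas A) {I J L : {set 'I_N}} : IK A I -> IK A J -> IK A L ->
  I \subset J -> J \subset L -> forall x,
  UU A I J x -> UU A J L (phi A I J x) -> UU A I L x ->
  phi A J L (phi A I J x) = phi A I L x.
Proof.
move=> hI hJ hL hIJ hJL x h1 h2 h3.
have [hz _] := chart_facts hA hI.
have [pIJ _] := cc_facts hA hI hJ hIJ.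
have [pJL _] := cc_facts hA hJ hL hJL.
have [pIL _] := cc_facts hA hI hL (subset_trans hIJ hJL).
have e1 : phi A I J x = pr _ (Phi A I J (zero _ x)) by rewrite pIJ hz.
rewrite e1 -pJL -?e1 // (cocE hA hI hJ hL hIJ hJL) ?hz // -?e1 // pIL ?hz //.
Qed.

Lemma sub_lower {X : topspace} {N : nat} {A : atlas_data X N}
  (hA : is_tame_top_atlas A) {I M L : {set 'I_N}} : IK A I -> IK A M -> IK A L ->
  I \subset M -> M \subset L -> forall x, UU A I L x -> UU A I M x.
Proof.
unpackA hA => hI hM hL hIM hML x h.
have [_ hb] := ht1 I M L hI hM hL hIM (subset_trans hIM hML) x.
by apply: (proj1 (hb _)); rewrite /UUc (setUidPr hML).
Qed.

Lemma tame_union {X : topspace} {N : nat} {A : atlas_data X N}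
  (hA : is_tame_top_atlas A) {I J K : {set 'I_N}} : IK A I -> IK A J -> IK A K ->
  I \subset J -> I \subset K -> forall x, UU A I J x -> UU A I K x ->
  IK A (J :|: K) /\ UU A I (J :|: K) x.
Proof.
unpackA hA => hI hJ hK hIJ hIK x h1 h2.
by have [/(_ (conj h1 h2)) //] := ht1 I J K hI hJ hK hIJ hIK x.
Qed.

Lemma push {X : topspace} {N : nat} {A : atlas_data X N}
  (hA : is_tame_top_atlas A) {I M L : {set 'I_N}} : IK A I -> IK A M -> IK A L ->
  I \subset M -> M \subset L -> forall x, UU A I M x -> UU A I L x ->
  UU A M L (phi A I M x).
Proof.
unpackA hA => hI hM hL hIM hML x h1 h2.
have [hf _] := ht2 I M L hI hM hL hIM hML (phi A I M x).
by apply: (proj1 (hf _)); exists x.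
Qed.

Lemma filtU {X : topspace} {N : nat} {A : atlas_data X N}
  (hA : is_tame_top_atlas A) {I M : {set 'I_N}} : IK A I -> IK A M ->
  I \subset M -> forall x, UU A I M x -> Efilt A I M (sec _ (phi A I M x)).
Proof.
unpackA hA => hI hM hIM x h1.
have [hf _] := ht2 I M M hI hM hM hIM (subxx M) (phi A I M x).
by apply: (proj2 (hf _)); exists x.
Qed.

Lemma lift {X : topspace} {N : nat} {A : atlas_data X N}
  (hA : is_tame_top_atlas A) {I M L : {set 'I_N}} : IK A I -> IK A M -> IK A L ->
  I \subset M -> M \subset L -> forall x, UU A I M x -> UU A M L (phi A I M x) ->
  UU A I L x.
Proof.
move=> hI hM hL hIM hML x h1 h2.
have hf := filtU hA hI hM hIM x h1.
move: (hA) => [_ [_ [_ ht2]]].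
have [_ /(_ (conj h2 hf)) [x' [h3 [h4 h5]]]] := ht2 I M L hI hM hL hIM hML (phi A I M x).
have [_ [_ [_ [_ [hinj _]]]]] := cc_facts hA hI hM hIM.
by rewrite -(hinj _ _ h4 h1 h5).
Qed.

Definition RU {X : topspace} {N : nat} (A : atlas_data X N) (I J : {set 'I_N})
  (x : cU (Ch A I)) (y : cU (Ch A J)) : Prop :=
  IK A (I :|: J) /\ UU A I (I :|: J) x /\ UU A J (I :|: J) y /\
  phi A I (I :|: J) x = phi A J (I :|: J) y.

Definition RE {X : topspace} {N : nat} (A : atlas_data X N) (I J : {set 'I_N})
  (e : cE (Ch A I)) (f : cE (Ch A J)) : Prop :=
  IK A (I :|: J) /\ UU A I (I :|: J) (pr _ e) /\ UU A J (I :|: J) (pr _ f) /\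
  Phi A I (I :|: J) e = Phi A J (I :|: J) f.

Lemma IK_U {X : topspace} {N : nat} {A : atlas_data X N} {I K L : {set 'I_N}} :
  IK A I -> IK A L -> I \subset L -> K \subset L -> IK A (I :|: K).
Proof.
move=> [hI0 _] hL hIL hKL; apply: (IK_sub _ _ hL); first by rewrite subUset hIL.
by rewrite setU_eq0 negb_and hI0.
Qed.

Lemma down_U {X : topspace} {N : nat} {A : atlas_data X N}
  (hA : is_tame_top_atlas A) {I K L : {set 'I_N}} : IK A I -> IK A K -> IK A L ->
  I \subset L -> K \subset L -> forall x z,
  UU A I L x -> UU A K L z -> phi A I L x = phi A K L z -> RU A I K x z.
Proof.
move=> hI hK hL hIL hKL x z hx hz e.
have hQ : IK A (I :|: K) := IK_U hI hL hIL hKL.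
have hQL : I :|: K \subset L by rewrite subUset hIL.
have hxQ := sub_lower hA hI hQ hL (subsetUl I K) hQL x hx.
have hzQ := sub_lower hA hK hQ hL (subsetUr I K) hQL z hz.
have hxQL := push hA hI hQ hL (subsetUl I K) hQL x hxQ hx.
have hzQL := push hA hK hQ hL (subsetUr I K) hQL z hzQ hz.
split=> //; split=> //; split=> //.
have [_ [_ [_ [_ [hinj _]]]]] := cc_facts hA hQ hL hQL.
apply: hinj => //.
by rewrite (cocU hA hI hQ hL _ hQL x hxQ hxQL hx) ?subsetUl //
           (cocU hA hK hQ hL _ hQL z hzQ hzQL hz) ?subsetUr.
Qed.

Lemma down_E {X : topspace} {N : nat} {A : atlas_data X N}
  (hA : is_tame_top_atlas A) {I K L : {set 'I_N}} : IK A I -> IK A K -> IK A L ->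
  I \subset L -> K \subset L -> forall e g,
  UU A I L (pr _ e) -> UU A K L (pr _ g) -> Phi A I L e = Phi A K L g -> RE A I K e g.
Proof.
move=> hI hK hL hIL hKL e g hx hz eq.
have hQ : IK A (I :|: K) := IK_U hI hL hIL hKL.
have hQL : I :|: K \subset L by rewrite subUset hIL.
have hIQ := subsetUl I K. have hKQ := subsetUr I K.
have hxQ := sub_lower hA hI hQ hL hIQ hQL _ hx.
have hzQ := sub_lower hA hK hQ hL hKQ hQL _ hz.
have hxQL := push hA hI hQ hL hIQ hQL _ hxQ hx.
have hzQL := push hA hK hQ hL hKQ hQL _ hzQ hz.
split=> //; split=> //; split=> //.
have [_ [_ [_ [_ [_ hinj]]]]] := cc_facts hA hQ hL hQL.
have [prI _] := cc_facts hA hI hQ hIQ.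
have [prK _] := cc_facts hA hK hQ hKQ.
apply: hinj; rewrite ?prI ?prK //.
by rewrite (cocE hA hI hQ hL hIQ hQL e hxQ hxQL hx) (cocE hA hK hQ hL hKQ hQL g hzQ hzQL hz).
Qed.

Lemma trans_gen {X : topspace} {N : nat} {A : atlas_data X N}
  (hA : is_tame_top_atlas A) {I J K M P : {set 'I_N}} : IK A I -> IK A J -> IK A K ->
  IK A M -> IK A P -> I \subset M -> J \subset M -> J \subset P -> K \subset P ->
  forall x y z, UU A I M x -> UU A J M y -> phi A I M x = phi A J M y ->
  UU A J P y -> UU A K P z -> phi A J P y = phi A K P z ->
  IK A (M :|: P) /\ I \subset M :|: P /\ K \subset M :|: P /\
  UU A I M x /\ UU A M (M :|: P) (phi A I M x) /\ UU A I (M :|: P) x /\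
  UU A K P z /\ UU A P (M :|: P) (phi A K P z) /\ UU A K (M :|: P) z /\
  phi A I (M :|: P) x = phi A K (M :|: P) z.
Proof.
move=> hI hJ hK hM hP hIM hJM hJP hKP x y z hxM hyM eM hyP hzP eP.
have [hL hyL] := tame_union hA hJ hM hP hJM hJP y hyM hyP.
have hML := subsetUl M P. have hPL := subsetUr M P.
have hyML := push hA hJ hM hL hJM hML y hyM hyL.
have hxML : UU A M (M :|: P) (phi A I M x) by rewrite eM.
have hxL := lift hA hI hM hL hIM hML x hxM hxML.
have hyPL := push hA hJ hP hL hJP hPL y hyP hyL.
have hzPL : UU A P (M :|: P) (phi A K P z) by rewrite -eP.
have hzL := lift hA hK hP hL hKP hPL z hzP hzPL.
have hIL := subset_trans hIM hML. have hKL := subset_trans hKP hPL.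
do 9!(split=> //).
rewrite -(cocU hA hI hM hL hIM hML x hxM hxML hxL) eM.
rewrite (cocU hA hJ hM hL hJM hML y hyM hyML hyL).
rewrite -(cocU hA hJ hP hL hJP hPL y hyP hyPL hyL) eP.
by rewrite (cocU hA hK hP hL hKP hPL z hzP hzPL hzL).
Qed.

Lemma trans_U {X : topspace} {N : nat} {A : atlas_data X N}
  (hA : is_tame_top_atlas A) {I J K : {set 'I_N}} : IK A I -> IK A J -> IK A K ->
  forall x y z, RU A I J x y -> RU A J K y z -> RU A I K x z.
Proof.
move=> hI hJ hK x y z [hM [hxM [hyM eM]]] [hP [hyP [hzP eP]]].
have [hL [hIL [hKL [_ [_ [hxL [_ [_ [hzL e]]]]]]]]] :=
  trans_gen hA hI hJ hK hM hP (subsetUl I J) (subsetUr I J) (subsetUl J K) (subsetUr J K)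
    x y z hxM hyM eM hyP hzP eP.
exact: (down_U hA hI hK hL hIL hKL x z hxL hzL e).
Qed.

Lemma trans_E {X : topspace} {N : nat} {A : atlas_data X N}
  (hA : is_tame_top_atlas A) {I J K : {set 'I_N}} : IK A I -> IK A J -> IK A K ->
  forall e f g, RE A I J e f -> RE A J K f g -> RE A I K e g.
Proof.
move=> hI hJ hK e f g [hM [hxM [hyM eM]]] [hP [hyP [hzP eP]]].
have hIM := subsetUl I J. have hJM := subsetUr I J.
have hJP := subsetUl J K. have hKP := subsetUr J K.
have [prIM _] := cc_facts hA hI hM hIM.
have [prJM _] := cc_facts hA hJ hM hJM.
have [prJP _] := cc_facts hA hJ hP hJP.
have [prKP _] := cc_facts hA hK hP hKP.
have eM' : phi A I (I :|: J) (pr _ e) = phi A J (I :|: J) (pr _ f)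
  by rewrite -prIM // -prJM // eM.
have eP' : phi A J (J :|: K) (pr _ f) = phi A K (J :|: K) (pr _ g)
  by rewrite -prJP // -prKP // eP.
have [hL [hIL [hKL [_ [hxML [hxL [_ [hzPL [hzL _]]]]]]]]] :=
  trans_gen hA hI hJ hK hM hP hIM hJM hJP hKP _ _ _ hxM hyM eM' hyP hzP eP'.
have [hyL _] := tame_union hA hJ hM hP hJM hJP _ hyM hyP.
have [_ [hyL' _]] := trans_gen hA hI hJ hK hM hP hIM hJM hJP hKP _ _ _ hxM hyM eM' hyP hzP eP'.
apply: (down_E hA hI hK hL hIL hKL e g hxL hzL).
have hML := subsetUl (I :|: J) (J :|: K). have hPL := subsetUr (I :|: J) (J :|: K).
have [_ hyL2] := tame_union hA hJ hM hP hJM hJP _ hyM hyP.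
have hyML := push hA hJ hM hL hJM hML _ hyM hyL2.
have hyPL := push hA hJ hP hL hJP hPL _ hyP hyL2.
rewrite -(cocE hA hI hM hL hIM hML e hxM hxML hxL) eM.
rewrite (cocE hA hJ hM hL hJM hML f hyM hyML hyL2).
rewrite -(cocE hA hJ hP hL hJP hPL f hyP hyPL hyL2) eP.
by rewrite (cocE hA hK hP hL hKP hPL g hzP hzPL hzL).
Qed.

Lemma RU_refl {X : topspace} {N : nat} {A : atlas_data X N}
  (hA : is_tame_top_atlas A) {I : {set 'I_N}} : IK A I -> forall x, RU A I I x x.
Proof. unpackA hA => hI x; by rewrite /RU setUid.
Qed.

Lemma RE_refl {X : topspace} {N : nat} {A : atlas_data X N}
  (hA : is_tame_top_atlas A) {I : {set 'I_N}} : IK A I -> forall e, RE A I I e e.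
Proof. unpackA hA => hI e; by rewrite /RE setUid.
Qed.

Lemma RU_sym {X : topspace} {N : nat} {A : atlas_data X N} {I J : {set 'I_N}} x y :
  RU A I J x y -> RU A J I y x.
Proof. rewrite /RU setUC => -[h1 [h2 [h3 h4]]]; by split; [|split; [|split]]. Qed.

Lemma RE_sym {X : topspace} {N : nat} {A : atlas_data X N} {I J : {set 'I_N}} e f :
  RE A I J e f -> RE A J I f e.
Proof. rewrite /RE setUC => -[h1 [h2 [h3 h4]]]; by split; [|split; [|split]]. Qed.

Definition RUp {X : topspace} {N : nat} (A : atlas_data X N) (p q : ptU A) : Prop :=
  RU A (projT1 p) (projT1 q) (projT2 p) (projT2 q).
Definition REp {X : topspace} {N : nat} (A : atlas_data X N) (p q : ptE A) : Prop :=
  RE A (projT1 p) (projT1 q) (projT2 p) (projT2 q).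

Lemma equivU_inv {X : topspace} {N : nat} {A : atlas_data X N}
  (hA : is_tame_top_atlas A) (p q : ptU A) : equivU A p q ->
  p = q \/ (IK A (projT1 p) /\ IK A (projT1 q) /\ RUp A p q).
Proof.
elim=> {p q}.
- move=> p q [I J x hI hJ hIJ hx]; right; split=> //; split=> //.
  move: (hA) => [[_ [_ [_ [hUII [hphiII _]]]]] _].
  rewrite /RUp /RU /= (setUidPr hIJ); do 3?split=> //; by rewrite hphiII.
- by move=> p; left.
- move=> p q _ [->|[h1 [h2 h3]]]; first by left.
  by right; split=> //; split=> //; exact: RU_sym.
- move=> p q r _ [e1|[h1 [h2 h3]]] _ [e2|[h4 [h5 h6]]].
  + by left; rewrite e1.
  + by right; rewrite e1.
  + by right; rewrite -e2.
  + right; split=> //; split=> //; exact: (trans_U hA h1 h2 h5 _ _ _ h3 h6).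
Qed.

Lemma equivE_inv {X : topspace} {N : nat} {A : atlas_data X N}
  (hA : is_tame_top_atlas A) (p q : ptE A) : equivE A p q ->
  p = q \/ (IK A (projT1 p) /\ IK A (projT1 q) /\ REp A p q).
Proof.
elim=> {p q}.
- move=> p q [I J x hI hJ hIJ hx]; right; split=> //; split=> //.
  move: (hA) => [[_ [_ [_ [hUII [hphiII [hPhiII _]]]]]] _].
  by rewrite /REp /RE /= (setUidPr hIJ).
- by move=> p; left.
- move=> p q _ [->|[h1 [h2 h3]]]; first by left.
  by right; split=> //; split=> //; exact: RE_sym.
- move=> p q r _ [e1|[h1 [h2 h3]]] _ [e2|[h4 [h5 h6]]].
  + by left; rewrite e1.
  + by right; rewrite e1.
  + by right; rewrite -e2.
  + right; split=> //; split=> //; exact: (trans_E hA h1 h2 h5 _ _ _ h3 h6).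
Qed.

Lemma equivU_iff {X : topspace} {N : nat} {A : atlas_data X N}
  (hA : is_tame_top_atlas A) (I J : {set 'I_N}) x y : IK A I -> IK A J ->
  equivU A (existT _ I x) (existT _ J y) <-> RU A I J x y.
Proof.
move=> hI hJ; split.
  move=> /(equivU_inv hA) [e|[_ [_ h]]]; last exact: h.
  change (RUp A (existT _ I x) (existT _ J y)); rewrite -e; exact: RU_refl.
move=> [hL [hx [hy e]]].
apply: (rst_trans _ _ _ (existT _ (I :|: J) (phi A I (I :|: J) x))).
  apply: rst_step; apply: stepU_intro => //; exact: subsetUl.
rewrite e; apply: rst_sym; apply: rst_step; apply: stepU_intro => //; exact: subsetUr.
Qed.

Lemma equivE_iff {X : topspace} {N : nat} {A : atlas_data X N}
  (hA : is_tame_top_atlas A) (I J : {set 'I_N}) e f : IK A I -> IK A J ->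
  equivE A (existT _ I e) (existT _ J f) <-> RE A I J e f.
Proof.
move=> hI hJ; split.
  move=> /(equivE_inv hA) [eq|[_ [_ h]]]; last exact: h.
  change (REp A (existT _ I e) (existT _ J f)); rewrite -eq; exact: RE_refl.
move=> [hL [hx [hy eq]]].
apply: (rst_trans _ _ _ (existT _ (I :|: J) (Phi A I (I :|: J) e))).
  apply: rst_step; apply: stepE_intro => //; exact: subsetUl.
rewrite eq; apply: rst_sym; apply: rst_step; apply: stepE_intro => //; exact: subsetUr.
Qed.

Lemma proper_disj {X : topspace} {N : nat} {A : atlas_data X N} {I J : {set 'I_N}} :
  IK A J -> I :&: J = set0 -> I \proper I :|: J.
Proof.
move=> [hJ0 _] h0; rewrite properEneq subsetUl andbT.
apply/negP => /eqP eIJ.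
have hJI : J \subset I by rewrite eIJ subsetUr.
by move: h0; rewrite (setIidPr hJI) => h; move: hJ0; rewrite h eqxx.
Qed.

Lemma zset_down {X : topspace} {N : nat} {A : atlas_data X N}
  (hA : is_tame_top_atlas A) {I L : {set 'I_N}} : IK A I -> IK A L -> I \subset L ->
  forall x, UU A I L x -> zset (phi A I L x) -> zset x.
Proof.
move=> hI hL hIL x hx hz.
have [_ [hzero [hsec [_ [_ hPinj]]]]] := cc_facts hA hI hL hIL.
have [cz [cs _]] := chart_facts hA hI.
apply: hPinj; rewrite ?cz ?cs //.
by rewrite -hzero // -hsec.
Qed.

Lemma U23 {X : topspace} {N : nat} {A : atlas_data X N}
  (hA : is_tame_top_atlas A) (I J : {set 'I_N}) x y : IK A I -> IK A J ->
  RU A I J x y ->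
  ((I :&: J != set0 /\
          exists w : cU (Ch A (I :&: J)),
            UU A (I :&: J) I w /\ UU A (I :&: J) J w /\
            phi A (I :&: J) I w = x /\ phi A (I :&: J) J w = y) \/
         (I :&: J = set0 /\ zset x /\ zset y /\ psi _ x = psi _ y)).
Proof.
move=> hI hJ [hL [hx [hy e]]].
have hIL := subsetUl I J. have hJL := subsetUr I J.
have fI := filtU hA hI hL hIL x hx.
have fJ := filtU hA hJ hL hJL y hy.
rewrite -e in fJ.
move: (hA) => [[_ [_ [_ [hUII _]]]] [[_ [_ [hf2 [_ [hf4 _]]]]] [_ ht2]]].
have fH := proj1 (hf4 I J _ hL hIL hJL _) (conj fI fJ).
case: (eqVneq (I :&: J) set0) => [h0|hne].
  right; split=> //.
  rewrite h0 in fH.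
  have [a' ea] := proj1 (hf2 _ hL _) fH.
  have [cz [cs _]] := chart_facts hA hL.
  have ea' : a' = phi A I (I :|: J) x by rewrite -(cz a') -ea cs.
  have za : zset (phi A I (I :|: J) x) by rewrite /zset ea ea'.
  have zb : zset (phi A J (I :|: J) y) by rewrite -e.
  have zx := zset_down hA hI hL hIL x hx za.
  have zy := zset_down hA hJ hL hJL y hy zb.
  have [_ [_ [_ [hpI _]]]] := cc_facts hA hI hL hIL.
  have [_ [_ [_ [hpJ _]]]] := cc_facts hA hJ hL hJL.
  split=> //; split=> //.
  by rewrite -(proj2 (hpI x hx zx)) -(proj2 (hpJ y hy zy)) e.
left; split=> //.
have hHI := subsetIl I J. have hHJ := subsetIr I J.
have hH : IK A (I :&: J) := IK_sub _ _ hI hHI hne.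
have hHL := subset_trans hHI hIL.
have [_ /(_ (conj (hUII _ _) fH)) [w [hw [_ ew]]]] := ht2 _ _ _ hH hL hL hHL (subxx _) (phi A I (I :|: J) x).
have hwI := sub_lower hA hH hI hL hHI hIL w hw.
have hwJ := sub_lower hA hH hJ hL hHJ hJL w hw.
exists w; split=> //; split=> //.
have hwIL := push hA hH hI hL hHI hIL w hwI hw.
have hwJL := push hA hH hJ hL hHJ hJL w hwJ hw.
have [_ [_ [_ [_ [hinjI _]]]]] := cc_facts hA hI hL hIL.
have [_ [_ [_ [_ [hinjJ _]]]]] := cc_facts hA hJ hL hJL.
split; [apply: hinjI | apply: hinjJ] => //.
  by rewrite (cocU hA hH hI hL hHI hIL w hwI hwIL hw).
by rewrite (cocU hA hH hJ hL hHJ hJL w hwJ hwJL hw) ew.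
Qed.

Lemma U32 {X : topspace} {N : nat} {A : atlas_data X N}
  (hA : is_tame_top_atlas A) (I J : {set 'I_N}) x y : IK A I -> IK A J ->
  ((I :&: J != set0 /\
          exists w : cU (Ch A (I :&: J)),
            UU A (I :&: J) I w /\ UU A (I :&: J) J w /\
            phi A (I :&: J) I w = x /\ phi A (I :&: J) J w = y) \/
         (I :&: J = set0 /\ zset x /\ zset y /\ psi _ x = psi _ y)) ->
  RU A I J x y.
Proof.
move=> hI hJ [[hne [w [hwI [hwJ [<- <-]]]]]|[h0 [zx [zy ep]]]].
  have hHI := subsetIl I J. have hHJ := subsetIr I J.
  have hH : IK A (I :&: J) := IK_sub _ _ hI hHI hne.
  have [hL hw] := tame_union hA hH hI hJ hHI hHJ w hwI hwJ.
  have hIL := subsetUl I J. have hJL := subsetUr I J.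
  have hwIL := push hA hH hI hL hHI hIL w hwI hw.
  have hwJL := push hA hH hJ hL hHJ hJL w hwJ hw.
  split=> //; split=> //; split=> //.
  by rewrite (cocU hA hH hI hL hHI hIL w hwI hwIL hw) (cocU hA hH hJ hL hHJ hJL w hwJ hwJL hw).
have [_ [_ [fx _]]] := chart_facts hA hI.
have [_ [_ [fy _]]] := chart_facts hA hJ.
have fL : FI A (I :|: J) (psi _ x) by apply: FI_U; [exact: fx | rewrite ep; exact: fy].
have hL : IK A (I :|: J).
  split; last by exists (psi _ x).
  by move: hI => [hI0 _]; rewrite setU_eq0 negb_and hI0.
have pIL : I \proper I :|: J := proper_disj hJ h0.
have pJL : J \proper I :|: J.
  have h0' : J :&: I = set0 by rewrite setIC.
  by rewrite setUC; exact: (proper_disj hI h0').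
move: (hA) => [[_ [_ [_ [_ [_ [_ [hcc _]]]]]]] _].
have [_ [czI _]] := hcc _ _ hI hL pIL.
have [_ [czJ _]] := hcc _ _ hJ hL pJL.
have [hx _] := proj2 (czI x) (conj zx (conj (fx x zx) fL)).
have fL' : FI A (I :|: J) (psi _ y) by rewrite -ep.
have [hy _] := proj2 (czJ y) (conj zy (conj (fy y zy) fL')).
split=> //; split=> //; split=> //.
have [_ [_ [_ [hpI _]]]] := cc_facts hA hI hL (proper_sub pIL).
have [_ [_ [_ [hpJ _]]]] := cc_facts hA hJ hL (proper_sub pJL).
have [_ [_ [_ hinj]]] := chart_facts hA hL.
have [z1 p1] := hpI x hx zx. have [z2 p2] := hpJ y hy zy.
by apply: hinj => //; rewrite p1 p2.
Qed.

Lemma filtE_sub {X : topspace} {N : nat} {A : atlas_data X N}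
  (hA : is_tame_top_atlas A) {I L : {set 'I_N}} : IK A I -> IK A L -> I \subset L ->
  forall e, UU A I L (pr _ e) -> Efilt A I L (Phi A I L e).
Proof.
unpackA hA => hI hL hIL e he.
case: (eqVneq I L) => [eIL|nIL].
  by move: he; rewrite -eIL hPhiII => _; apply: hf1.
have pIL : I \proper L by rewrite properEneq nIL.
have [hf _] := hf3 I I L hI hL (subxx I) pIL (Phi A I L e).
by have [] := hf (ex_intro _ e (conj he (conj (hf1 I hI e) erefl))).
Qed.

Lemma E23 {X : topspace} {N : nat} {A : atlas_data X N}
  (hA : is_tame_top_atlas A) (I J : {set 'I_N}) e f : IK A I -> IK A J ->
  RE A I J e f ->
  ((I :&: J != set0 /\
          exists g : cE (Ch A (I :&: J)),
            UU A (I :&: J) I (pr _ g) /\ UU A (I :&: J) J (pr _ g) /\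
            Phi A (I :&: J) I g = e /\ Phi A (I :&: J) J g = f) \/
         (I :&: J = set0 /\
          exists (x : cU (Ch A I)) (y : cU (Ch A J)),
            e = sec _ x /\ e = zero _ x /\ f = sec _ y /\ f = zero _ y /\
            psi _ x = psi _ y)).
Proof.
move=> hI hJ [hL [hx [hy eq]]].
have hIL := subsetUl I J. have hJL := subsetUr I J.
have [prI [hzI [_ [_ [_ hPinjI]]]]] := cc_facts hA hI hL hIL.
have [prJ [hzJ [_ [_ [_ hPinjJ]]]]] := cc_facts hA hJ hL hJL.
have eq' : phi A I (I :|: J) (pr _ e) = phi A J (I :|: J) (pr _ f)
  by rewrite -prI // -prJ // eq.
have U3 := U23 hA I J _ _ hI hJ (conj hL (conj hx (conj hy eq'))).
have fI := filtE_sub hA hI hL hIL e hx.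
have fJ := filtE_sub hA hJ hL hJL f hy.
rewrite -eq in fJ.
move: (hA) => [[_ [_ [_ [hUII [hphiII [hPhiII _]]]]]] [[_ [_ [hf2 [hf3 [hf4 _]]]]] _]].
have fH := proj1 (hf4 I J _ hL hIL hJL _) (conj fI fJ).
case: U3 => [[hne [w [hwI [hwJ [ewI ewJ]]]]]|[h0 [zx [zy ep]]]].
  left; split=> //.
  case: (eqVneq I J) => [eIJ|nIJ].
    subst J; rewrite setIid; exists e.
    have ef : e = f by apply: hPinjI.
    by rewrite -ef hPhiII.
  have hHI := subsetIl I J. have hHJ := subsetIr I J.
  have hH : IK A (I :&: J) := IK_sub _ _ hI hHI hne.
  have hHL := subset_trans hHI hIL.
  have pHL : I :&: J \proper I :|: J.
    rewrite properEneq hHL andbT; apply/negP => /eqP eHL.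
    move/negP: nIJ; apply; rewrite eqEsubset.
    apply/andP; split.
      by apply: subset_trans (subsetUl I J) _; rewrite -eHL subsetIr.
    by apply: subset_trans (subsetUr I J) _; rewrite -eHL subsetIl.
  have [_ hw] := tame_union hA hH hI hJ hHI hHJ w hwI hwJ.
  have hwIL := push hA hH hI hL hHI hIL w hwI hw.
  have hwJL := push hA hH hJ hL hHJ hJL w hwJ hw.
  have eb : pr _ (Phi A I (I :|: J) e) = phi A (I :&: J) (I :|: J) w.
    by rewrite prI // -ewI (cocU hA hH hI hL hHI hIL w hwI hwIL hw).
  have [_ hb] := hf3 _ _ _ hH hL (subxx _) pHL (Phi A I (I :|: J) e).
  have [g0 [hg0 [_ eg0]]] := hb (conj fH (ex_intro _ w (conj hw (esym eb)))).
  have [prHL [_ [_ [_ [hinjH _]]]]] := cc_facts hA hH hL hHL.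
  have prg0 : pr _ g0 = w.
    by apply: hinjH => //; rewrite -prHL // eg0 eb.
  have [prHI _] := cc_facts hA hH hI hHI.
  have [prHJ _] := cc_facts hA hH hJ hHJ.
  exists g0; rewrite prg0; split=> //; split=> //; split.
    apply: hPinjI => //; first by rewrite prHI ?prg0 ?ewI.
    rewrite (cocE hA hH hI hL hHI hIL g0) ?prg0 //.
  apply: hPinjJ => //; first by rewrite prHJ ?prg0 ?ewJ.
  by rewrite (cocE hA hH hJ hL hHJ hJL g0) ?prg0 // eg0 eq.
right; split=> //.
rewrite h0 in fH.
have [a' ea] := proj1 (hf2 _ hL _) fH.
have [cz [cs _]] := chart_facts hA hL.
have [czI _] := chart_facts hA hI.
have [czJ _] := chart_facts hA hJ.
have ee : e = zero _ (pr _ e).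
  apply: hPinjI; rewrite ?czI //.
  by rewrite -hzI // -prI // ea cz.
have ef : f = zero _ (pr _ f).
  apply: hPinjJ; rewrite ?czJ //.
  by rewrite -hzJ // -prJ // -eq ea cz.
exists (pr _ e), (pr _ f).
by rewrite zx zy -ee -ef.
Qed.

Lemma E32 {X : topspace} {N : nat} {A : atlas_data X N}
  (hA : is_tame_top_atlas A) (I J : {set 'I_N}) e f : IK A I -> IK A J ->
  ((I :&: J != set0 /\
          exists g : cE (Ch A (I :&: J)),
            UU A (I :&: J) I (pr _ g) /\ UU A (I :&: J) J (pr _ g) /\
            Phi A (I :&: J) I g = e /\ Phi A (I :&: J) J g = f) \/
         (I :&: J = set0 /\
          exists (x : cU (Ch A I)) (y : cU (Ch A J)),
            e = sec _ x /\ e = zero _ x /\ f = sec _ y /\ f = zero _ y /\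
            psi _ x = psi _ y)) ->
  RE A I J e f.
Proof.
move=> hI hJ [[hne [g [hgI [hgJ [<- <-]]]]]|[h0 [x [y [es [ez [fs [fz ep]]]]]]]].
  have hHI := subsetIl I J. have hHJ := subsetIr I J.
  have hH : IK A (I :&: J) := IK_sub _ _ hI hHI hne.
  have [hL hg] := tame_union hA hH hI hJ hHI hHJ _ hgI hgJ.
  have hIL := subsetUl I J. have hJL := subsetUr I J.
  have hgIL := push hA hH hI hL hHI hIL _ hgI hg.
  have hgJL := push hA hH hJ hL hHJ hJL _ hgJ hg.
  have [prHI _] := cc_facts hA hH hI hHI.
  have [prHJ _] := cc_facts hA hH hJ hHJ.
  split=> //; split; first by rewrite prHI.
  split; first by rewrite prHJ.
  by rewrite (cocE hA hH hI hL hHI hIL g hgI hgIL hg) (cocE hA hH hJ hL hHJ hJL g hgJ hgJL hg).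
have zx : zset x by rewrite /zset -es -ez.
have zy : zset y by rewrite /zset -fs -fz.
have [hL [hx [hy exy]]] := U32 hA I J x y hI hJ (or_intror (conj h0 (conj zx (conj zy ep)))).
have [czI _] := chart_facts hA hI.
have [czJ _] := chart_facts hA hJ.
have [_ [hzI _]] := cc_facts hA hI hL (subsetUl I J).
have [_ [hzJ _]] := cc_facts hA hJ hL (subsetUr I J).
rewrite /RE ez fz !czI !czJ; split=> //; split=> //; split=> //.
by rewrite -hzI // -hzJ // exy.
Qed.

Theorem mainTheorem6 (X : topspace) (N : nat) (A : atlas_data X N)
  (hXc : compact_space X) (hXm : metrizable X)
  (hA : is_tame_top_atlas A) :
  (forall (I J : {set 'I_N}) (x : cU (Ch A I)) (y : cU (Ch A J)),
     IK A I -> IK A J ->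
     (equivU A (existT _ I x) (existT _ J y) <->
        (IK A (I :|: J) /\ UU A I (I :|: J) x /\ UU A J (I :|: J) y /\
         phi A I (I :|: J) x = phi A J (I :|: J) y)) /\
     ((IK A (I :|: J) /\ UU A I (I :|: J) x /\ UU A J (I :|: J) y /\
         phi A I (I :|: J) x = phi A J (I :|: J) y) <->
        ((I :&: J != set0 /\
          exists w : cU (Ch A (I :&: J)),
            UU A (I :&: J) I w /\ UU A (I :&: J) J w /\
            phi A (I :&: J) I w = x /\ phi A (I :&: J) J w = y) \/
         (I :&: J = set0 /\ zset x /\ zset y /\ psi _ x = psi _ y)))) /\
  (forall (I J : {set 'I_N}) (e : cE (Ch A I)) (f : cE (Ch A J)),
     IK A I -> IK A J ->
     (equivE A (existT _ I e) (existT _ J f) <->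
        (IK A (I :|: J) /\ UU A I (I :|: J) (pr _ e) /\ UU A J (I :|: J) (pr _ f) /\
         Phi A I (I :|: J) e = Phi A J (I :|: J) f)) /\
     ((IK A (I :|: J) /\ UU A I (I :|: J) (pr _ e) /\ UU A J (I :|: J) (pr _ f) /\
         Phi A I (I :|: J) e = Phi A J (I :|: J) f) <->
        ((I :&: J != set0 /\
          exists g : cE (Ch A (I :&: J)),
            UU A (I :&: J) I (pr _ g) /\ UU A (I :&: J) J (pr _ g) /\
            Phi A (I :&: J) I g = e /\ Phi A (I :&: J) J g = f) \/
         (I :&: J = set0 /\
          exists (x : cU (Ch A I)) (y : cU (Ch A J)),
            e = sec _ x /\ e = zero _ x /\ f = sec _ y /\ f = zero _ y /\
            psi _ x = psi _ y)))) /\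
  (forall (I : {set 'I_N}), IK A I ->
     (forall x y : cU (Ch A I), equivU A (existT _ I x) (existT _ I y) -> x = y) /\
     (forall e f : cE (Ch A I), equivE A (existT _ I e) (existT _ I f) -> e = f)).
Proof.
split.
  move=> I J x y hI hJ; split; first exact: equivU_iff.
  split; [exact: U23 | exact: U32].
split.
  move=> I J e f hI hJ; split; first exact: equivE_iff.
  split; [exact: E23 | exact: E32].
move=> I hI; split.
  move=> x y /(equivU_iff hA I I x y hI hI) [hL [hx [hy exy]]].
  have [_ [_ [_ [_ [hinj _]]]]] := cc_facts hA hI hL (subsetUl I I).
  exact: hinj.
move=> e f /(equivE_iff hA I I e f hI hI) [hL [hx [hy exy]]].
have [_ [_ [_ [_ [_ hinj]]]]] := cc_facts hA hI hL (subsetUl I I).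
exact: hinj.
Qed.
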